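(* Let $\mathcal{R},\mathcal{R}'$ be finite sets with $|\mathcal{R}|=|\mathcal{R}'|$, let $\mathcal{A}$ be a finite set of attributes, for each $a\in\mathcal{A}$ let $\mathcal{V}_a$ be a finite set and $\rho_a\in[0,1)$, and let $\mathcal{V}=\mathcal{V}'=\prod_{a\in\mathcal{A}}\mathcal{V}_a$. Then retention-replacement perturbation with retention probabilities $\rho_a$ is a $Pk$-anonymization for $$k=1+(|\mathcal{R}|-1)\prod_{a\in\mathcal{A}}\left(\frac{1-\rho_a}{1+(|\mathcal{V}_a|-1)\rho_a}\right)^2.$$
   Context: A table on $(\mathcal{R},\mathcal{V})$ is a map $\mathcal{R}\to\mathcal{V}$; $\mathcal{T}$, $\mathcal{T}'$ denote the sets of tables on $(\mathcal{R},\mathcal{V})$ and $(\mathcal{R}',\mathcal{V}')$. For sets $X,Y$, $X\to Y$ is the set of maps $X\to Y$. A privacy mechanism is $(\mathcal{R},\mathcal{V},\mathcal{R}',\mathcal{V}',\Pi,\Delta)$ with $\Pi$ uniformly distributed over bijections $\mathcal{R}\to\mathcal{R}'$ and $\Delta$ a random variable in $\mathcal{T}\to(\mathcal{R}\to\mathcal{V}')$; it is a privacy mechanism from $T$ to $T'$ if $T,\Pi,\Delta$ are mutually independent and $\Delta(T)=T'\circ\Pi$. Retention-replacement perturbation is the mechanism in which, for every $\tau\in\mathcal{T}$, the values $(\Delta(\tau))(r)$, $r\in\mathcal{R}$, are independent and $\Pr[(\Delta(\tau))(r)=v']=\prod_{a\in\mathcal{A}}(A_a)_{\tau(r)_a,v'_a}$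 (where $w_a$ is the $a$-component of $w$), with $(A_a)_{x,y}=\rho_a+\frac{1-\rho_a}{|\mathcal{V}_a|}$ if $x=y$ and $(A_a)_{x,y}=\frac{1-\rho_a}{|\mathcal{V}_a|}$ otherwise. $(\Delta,\tau')$ is $Pk$-anonymous if for all random variables $T,T'$ such that $\Delta$ is a privacy mechanism from $T$ to $T'$ and all $r\in\mathcal{R},r'\in\mathcal{R}'$, $\Pr[\Pi(r)=r'\mid T'=\tau']\le1/k$; $\Delta$ is a $Pk$-anonymization if $(\Delta,\tau')$ is $Pk$-anonymous for every $\tau'\in\mathcal{T}'$ for which some $\tau\in\mathcal{T}$ has $\Pr[\Delta(\tau)=\tau'\circ\Pi]\ne0$. *)

(* Defs.v *)
From mathcomp Require Import all_boot all_order all_algebra.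
Set Implicit Arguments. Unset Strict Implicit. Unset Printing Implicit Defensive.
Import Order.TTheory GRing.Theory Num.Theory.
Local Open Scope ring_scope.

Section Prob.
Variables (R : realFieldType) (Omega : finType) (P : Omega -> R).

Definition is_prob := (forall w, 0 <= P w) /\ \sum_w P w = 1.

Definition Pr (E : pred Omega) : R := \sum_(w | E w) P w.

(* conditional probability Pr[E | F] (= 0 when Pr[F] = 0, by x/0 = 0) *)
Definition cPr (E F : pred Omega) : R :=
  Pr [pred w | E w && F w] / Pr F.

Definition indep3 (T1 T2 T3 : finType)
    (X1 : Omega -> T1) (X2 : Omega -> T2) (X3 : Omega -> T3) :=
  forall (A1 : {set T1}) (A2 : {set T2}) (A3 : {set T3}),
    Pr [pred w | [&& X1 w \in A1, X2 w \in A2 & X3 w \in A3]] =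
    Pr [pred w | X1 w \in A1] * Pr [pred w | X2 w \in A2]
      * Pr [pred w | X3 w \in A3].

Definition indep_family (I T : finType) (X : I -> Omega -> T) :=
  forall S : I -> {set T},
    Pr [pred w | [forall i, X i w \in S i]] =
    \prod_i Pr [pred w | X i w \in S i].
End Prob.

Notation value Va := {dffun forall a, Va a}.

Definition isbij (X Y : finType) (f : {ffun X -> Y}) : bool :=
  injectiveb f && [forall y, y \in codom f].

Section Mech.
Variables (R : realFieldType) (Omega : finType) (P : Omega -> R).
Variables (Rw Rw' : finType) (V V' : finType).

Definition compose_tab (tau' : {ffun Rw' -> V'}) (pi : {ffun Rw -> Rw'})
  : {ffun Rw -> V'} := [ffun r => tau' (pi r)].

Definition privacy_mechanism (Pi : Omega -> {ffun Rw -> Rw'})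
    (Delta : Omega -> {ffun {ffun Rw -> V} -> {ffun Rw -> V'}}) :=
  forall f : {ffun Rw -> Rw'},
    Pr P [pred w | Pi w == f] =
    if isbij f then 1 / #|[pred g : {ffun Rw -> Rw'} | isbij g]|%:R else 0.

Definition mech_from (Pi : Omega -> {ffun Rw -> Rw'})
    (Delta : Omega -> {ffun {ffun Rw -> V} -> {ffun Rw -> V'}}) (T : Omega -> {ffun Rw -> V})
    (T' : Omega -> {ffun Rw' -> V'}) :=
  privacy_mechanism Pi Delta /\ indep3 P T Pi Delta /\
  (forall w, Delta w (T w) = compose_tab (T' w) (Pi w)).

Definition Pk_anonymous (k : R) (Pi : Omega -> {ffun Rw -> Rw'})
    (Delta : Omega -> {ffun {ffun Rw -> V} -> {ffun Rw -> V'}}) (tau' : {ffun Rw' -> V'}) :=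
  forall T T', mech_from Pi Delta T T' ->
  forall (r : Rw) (r' : Rw'),
    cPr P [pred w | Pi w r == r'] [pred w | T' w == tau'] <= 1 / k.

Definition Pk_anonymization (k : R) (Pi : Omega -> {ffun Rw -> Rw'})
    (Delta : Omega -> {ffun {ffun Rw -> V} -> {ffun Rw -> V'}}) :=
  forall tau' : {ffun Rw' -> V'},
    (exists tau : {ffun Rw -> V},
        Pr P [pred w | Delta w tau == compose_tab tau' (Pi w)] != 0) ->
    Pk_anonymous k Pi Delta tau'.
End Mech.

Section RR.
Variables (R : realFieldType) (A : finType) (Va : A -> finType) (rho : A -> R).

Definition Amat (a : A) (x y : Va a) : R :=
  if x == y then rho a + (1 - rho a) / #|Va a|%:R
  else (1 - rho a) / #|Va a|%:R.

Variables (Omega : finType) (P : Omega -> R) (Rw Rw' : finType).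

Definition rr_perturbation (Pi : Omega -> {ffun Rw -> Rw'})
    (Delta : Omega -> {ffun {ffun Rw -> value Va} -> {ffun Rw -> value Va}}) :=
  privacy_mechanism P Pi Delta /\
  forall tau : {ffun Rw -> value Va},
    indep_family P (fun r w => Delta w tau r) /\
    forall (r : Rw) (v' : value Va),
      Pr P [pred w | Delta w tau r == v'] = \prod_(a : A) @Amat a (tau r a) (v' a).
End RR.

(* Main.v *)
Require Import Defs.
From mathcomp Require Import all_boot all_order all_algebra all_fingroup.
From mathcomp Require Import reals.
From mathcomp Require Import ring lra.
Import Order.TTheory GRing.Theory Num.Theory.
Local Open Scope ring_scope.

Section Alg.
Variables (R : realType) (Rw Rw' A : finType) (Va : A -> finType) (rho : A -> R).
Hypothesis hrho : forall a, 0 <= rho a < 1.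

Definition ca a := (1 - rho a) / (1 + (#|Va a|%:R - 1) * rho a).

Lemma denom_gt0 a : 0 < 1 + (#|Va a|%:R - 1) * rho a.
Proof.
have /andP[h0 h1] := hrho a.
have hn : 0 <= (#|Va a|%:R : R) by apply: ler0n.
nra.
Qed.

Lemma ca_ge0 a : 0 <= ca a.
Proof.
have /andP[h0 h1] := hrho a.
apply: divr_ge0; first lra. exact: ltW (denom_gt0 a).
Qed.

Lemma ca_le1 a : ca a <= 1.
Proof.
have /andP[h0 h1] := hrho a.
have hn : 0 <= (#|Va a|%:R : R) by apply: ler0n.
rewrite /ca ler_pdivrMr ?denom_gt0 //. nra.
Qed.

Lemma Amat_ge0 a (x y : Va a) : 0 <= Amat rho x y.
Proof.
have /andP[h0 h1] := hrho a.
have hd : 0 <= (1 - rho a) / #|Va a|%:R by apply: divr_ge0; [lra | apply: ler0n].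
rewrite /Amat; case: ifP => _ //. lra.
Qed.

Lemma Amat_ratio a (x y y' : Va a) : ca a * Amat rho x y' <= Amat rho x y.
Proof.
have /andP[h0 h1] := hrho a.
have hn : (0 < #|Va a|)%N by apply/card_gt0P; exists x.
have hnR : 0 < (#|Va a|%:R : R) by rewrite ltr0n.
set n := (#|Va a|%:R : R) in hnR *.
have hd : 0 <= (1 - rho a) / n by apply: divr_ge0; [lra | exact: ltW].
have hM : Amat rho x y' <= rho a + (1 - rho a) / n.
  rewrite /Amat; case: ifP => _; lra.
have hm : (1 - rho a) / n <= Amat rho x y.
  rewrite /Amat; case: ifP => _; lra.
apply: le_trans (ler_wpM2l (ca_ge0 a) hM) _.
apply: le_trans hm; rewrite le_eqVlt; apply/orP; left; apply/eqP.
have hden := denom_gt0 a.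
rewrite /ca -/n. field.
apply/andP; split; [lra | apply/eqP; lra].
Qed.

Definition cc := \prod_a ca a.

Lemma cc_ge0 : 0 <= cc.
Proof. by apply: prodr_ge0 => a _; apply: ca_ge0. Qed.

Lemma cc_le1 : cc <= 1.
Proof. by apply: prodr_ile1 => a _; rewrite ca_ge0 ca_le1. Qed.

Definition qv (v y : value Va) := \prod_a Amat rho (v a) (y a).

Lemma qv_ge0 v y : 0 <= qv v y.
Proof. by apply: prodr_ge0 => a _; apply: Amat_ge0. Qed.

Lemma qv_ratio v y1 y2 : cc * qv v y2 <= qv v y1.
Proof.
rewrite /cc /qv -big_split /=. apply: ler_prod => a _.
by rewrite mulr_ge0 ?ca_ge0 ?Amat_ge0 // Amat_ratio.
Qed.

Definition GG (tau x : {ffun Rw -> value Va}) := \prod_i qv (tau i) (x i).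

Lemma GG_ge0 tau x : 0 <= GG tau x.
Proof. by apply: prodr_ge0 => i _; apply: qv_ge0. Qed.

Lemma GG_swap (r s : Rw) tau x :
  cc ^+ 2 * GG tau x <= GG tau [ffun i => x (tperm r s i)].
Proof.
case: (eqVneq s r) => [->|hsr].
  rewrite tperm1 /GG.
  have -> : \prod_i qv (tau i) ([ffun i0 => x ((1%g : {perm Rw}) i0)] i) =
            \prod_i qv (tau i) (x i).
    by apply: eq_bigr => i _; rewrite ffunE perm1.
  apply: ler_piMl; first exact: GG_ge0.
  by apply: exprn_ile1; [apply: cc_ge0 | apply: cc_le1].
rewrite /GG (bigD1 r) //= [X in _ <= X](bigD1 r) //=.
rewrite [\prod_(i | i != r) qv (tau i) (x i)](bigD1 s) /=; last by rewrite hsr.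
rewrite [\prod_(i | i != r) qv (tau i) ([ffun i0 => x (tperm r s i0)] i)](bigD1 s) /=; last by rewrite hsr.
rewrite !ffunE tpermL tpermR.
set Rr := \prod_(i | _) _.
set Rr' := \prod_(i | _) _.
have -> : Rr' = Rr.
  apply: eq_bigr => i /andP[hir his]; rewrite ffunE tpermD //.
  by rewrite eq_sym. by rewrite eq_sym.
have hR : 0 <= Rr by apply: prodr_ge0 => i _; apply: qv_ge0.
have -> : cc ^+ 2 * (qv (tau r) (x r) * (qv (tau s) (x s) * Rr)) =
   (cc * qv (tau r) (x r)) * ((cc * qv (tau s) (x s)) * Rr) by ring.
apply: ler_pM; rewrite ?mulr_ge0 ?cc_ge0 ?qv_ge0 ?qv_ratio //.
apply: ler_pM; rewrite ?mulr_ge0 ?cc_ge0 ?qv_ge0 ?qv_ratio //.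
Qed.
Variables (Omega : finType) (P : Omega -> R).
Hypothesis hP0 : forall w, 0 <= P w.
Variables (Pi : Omega -> {ffun Rw -> Rw'})
    (Delta : Omega -> {ffun {ffun Rw -> value Va} -> {ffun Rw -> value Va}}).
Variables (T : Omega -> {ffun Rw -> value Va}) (T' : Omega -> {ffun Rw' -> value Va}).
Variable tau' : {ffun Rw' -> value Va}.
Hypothesis hpm : privacy_mechanism P Pi Delta.
Hypothesis hrr : forall tau : {ffun Rw -> value Va},
    indep_family P (fun r w => Delta w tau r) /\
    forall (r : Rw) (v' : value Va),
      Pr P [pred w | Delta w tau r == v'] = \prod_(a : A) @Amat R A Va rho a (tau r a) (v' a).
Hypothesis hind : indep3 P T Pi Delta.
Hypothesis hDT : forall w, Delta w (T w) = compose_tab (T' w) (Pi w).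

Lemma Pr_ge0 (E : pred Omega) : 0 <= Pr P E.
Proof. by apply: sumr_ge0 => w _; apply: hP0. Qed.

Lemma Pr_le (E F : pred Omega) : (forall w, E w -> F w) -> Pr P E <= Pr P F.
Proof.
move=> hEF; rewrite /Pr [X in _ <= X](bigID E) /=.
have -> : \sum_(w | E w) P w = \sum_(w | F w && E w) P w.
  apply: eq_bigl => w; case: (boolP (E w)) => h; last by rewrite andbF.
  by rewrite andbT hEF.
by rewrite lerDl; apply: sumr_ge0 => w _; apply: hP0.
Qed.

Definition hh (pi : {ffun Rw -> Rw'}) :=
  Pr P [pred w | (Pi w == pi) && (T' w == tau')].

Lemma hh_ge0 pi : 0 <= hh pi.
Proof. exact: Pr_ge0. Qed.

Lemma hh_nonbij pi : ~~ isbij pi -> hh pi = 0.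
Proof.
move=> hb; apply/eqP; rewrite eq_le hh_ge0 andbT.
apply: le_trans (@Pr_le _ [pred w | Pi w == pi] _) _.
  by move=> w /andP[].
by rewrite hpm (negbTE hb).
Qed.

Lemma compose_inj (pi : {ffun Rw -> Rw'}) (f g : {ffun Rw' -> value Va}) :
  isbij pi -> compose_tab f pi = compose_tab g pi -> f = g.
Proof.
case/andP=> _ /forallP hs e; apply/ffunP => y.
have /codomP [x ->] := hs y.
by have := congr1 (fun F : {ffun Rw -> value Va} => F x) e; rewrite !ffunE.
Qed.

Definition NN := (#|[pred g : {ffun Rw -> Rw'} | isbij g]|%:R : R).

Lemma hh_bij pi : isbij pi -> hh pi =
  \sum_tau Pr P [pred w | T w \in [set tau]] * (1 / NN) *
     GG tau (compose_tab tau' pi).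
Proof.
move=> hb; rewrite /hh /Pr (partition_big T predT) //=.
apply: eq_bigr => tau _.
transitivity (Pr P [pred w | [&& T w \in [set tau], Pi w \in [set pi] &
         Delta w \in [set d : {ffun {ffun Rw -> value Va} -> {ffun Rw -> value Va}} | d tau == compose_tab tau' pi]]]).
  apply: eq_bigl => w /=; rewrite !inE.
  case: (eqVneq (T w) tau) => [eT|]; last by rewrite andbF.
  case: (eqVneq (Pi w) pi) => [eP|] //=.
  rewrite andbT -eT hDT eP.
  apply/eqP/eqP => [->|e] //; exact: (compose_inj _ _ _ hb e).
rewrite hind.
have -> : Pr P [pred w | Pi w \in [set pi]] = 1 / NN.
  rewrite /NN; have := hpm pi; rewrite hb => <-; apply: eq_bigl => w; by rewrite /= inE.
congr (_ * _).
have [hfam hmarg] := hrr tau.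
transitivity (Pr P [pred w | [forall i, Delta w tau i \in [set compose_tab tau' pi i]]]).
  apply: eq_bigl => w /=; rewrite inE.
  apply/eqP/forallP => [-> i|H]; first by rewrite inE.
  apply/ffunP => i; move: (H i); rewrite inE; exact/eqP.
rewrite (hfam (fun i => [set compose_tab tau' pi i])).
apply: eq_bigr => i _; rewrite /qv -hmarg.
by apply: eq_bigl => w; rewrite /= inE.
Qed.

Variables (r : Rw) (r' : Rw').

Definition swp (s : Rw) (pi : {ffun Rw -> Rw'}) : {ffun Rw -> Rw'} :=
  [ffun i => pi (tperm r s i)].

Lemma swpK s : involutive (swp s).
Proof. by move=> pi; apply/ffunP => i; rewrite !ffunE tpermK. Qed.

Lemma swp_bij s pi : isbij pi -> isbij (swp s pi).
Proof.
case/andP => /injectiveP hinj /forallP hs; apply/andP; split.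
  apply/injectiveP => x y; rewrite !ffunE => /hinj.
  exact: (can_inj (tpermK r s)).
apply/forallP => y; have /codomP [x ->] := hs y.
by apply/codomP; exists (tperm r s x); rewrite ffunE tpermK.
Qed.

Lemma hh_swap pi s : cc ^+ 2 * hh pi <= hh (swp s pi).
Proof.
case: (boolP (isbij pi)) => hb; last first.
  by rewrite hh_nonbij // mulr0 hh_ge0.
rewrite !hh_bij ?swp_bij // mulr_sumr; apply: ler_sum => tau _.
have -> : compose_tab tau' (swp s pi) =
    [ffun i => compose_tab tau' pi (tperm r s i)].
  by apply/ffunP => i; rewrite !ffunE.
rewrite mulrCA; apply: ler_wpM2l; last exact: GG_swap.
apply: mulr_ge0; first exact: Pr_ge0.
by apply: divr_ge0; [apply: ler01 | apply: ler0n].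
Qed.

Definition S1 := \sum_(pi : {ffun Rw -> Rw'} | pi r == r') hh pi.
Definition S2 := \sum_(pi : {ffun Rw -> Rw'} | ~~ (pi r == r')) hh pi.

Lemma main_ineq : (#|Rw|%:R - 1) * (cc ^+ 2) * S1 <= S2.
Proof.
have hn : (0 < #|Rw|)%N by apply/card_gt0P; exists r.
have e1 : (#|Rw|%:R - 1) * cc ^+ 2 * S1 = \sum_(s | s != r) cc ^+ 2 * S1.
  rewrite sumr_const.
  have -> : #|[pred s | s != r]| = #|Rw|.-1 by rewrite -(cardC1 r); apply: eq_card.
  have -> : (#|Rw|%:R - 1 : R) = (#|Rw|.-1)%:R.
    by rewrite -{1}(prednK hn) -addn1 natrD addrK.
  by rewrite -mulrA mulr_natl.
rewrite e1.
apply: le_trans (_ : \sum_(s | s != r) \sum_(pi : {ffun Rw -> Rw'} | pi s == r') hh pi <= _).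
  apply: ler_sum => s _; rewrite /S1 mulr_sumr.
  apply: le_trans (_ : \sum_(pi : {ffun Rw -> Rw'} | pi r == r') hh (swp s pi) <= _).
    by apply: ler_sum => pi _; apply: hh_swap.
  rewrite [X in _ <= X](reindex_inj (can_inj (swpK s))) /=.
  rewrite le_eqVlt; apply/orP; left; apply/eqP.
  by apply: eq_bigl => pi; rewrite ffunE tpermR.
rewrite (exchange_big_dep predT) //= /S2 [X in _ <= X]big_mkcond /=.
apply: ler_sum => pi _.
case: (boolP (isbij pi)) => hb; last first.
  by rewrite hh_nonbij // big1 //; case: ifP.
case/andP: hb => /injectiveP hinj _.
case: ifPn => hr.
  case: (pickP [pred s | pi s == r']) => [s0 hs0 | hnone].
    rewrite (bigD1 s0) /=; last first.
      apply/andP; split => //; apply/eqP => e; subst s0.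
      by move: hs0 hr => /= ->.
    rewrite big1 ?addr0 // => s /andP[/andP[_ hs] hne].
    move: hs0 hs => /= /eqP hs0 /eqP hs.
    have e : s = s0 by apply: hinj; rewrite hs hs0.
    by rewrite e eqxx in hne.
  rewrite big1 ?hh_ge0 // => s /andP[_ hs].
  by move: (hnone s); rewrite /= hs.
rewrite big1 // => s /andP[hsr hs].
move: hr; rewrite negbK => /eqP hr; move: hs => /eqP hs.
by move: hsr; rewrite (hinj s r) ?eqxx // hs hr.
Qed.

Lemma final :
  cPr P [pred w | Pi w r == r'] [pred w | T' w == tau'] <=
  1 / (1 + (#|Rw|%:R - 1) *
         \prod_a ((1 - rho a) / (1 + (#|Va a|%:R - 1) * rho a)) ^+ 2).
Proof.
rewrite prodrXl -/(cc).
have num : Pr P [pred w | [pred w0 | Pi w0 r == r'] w && [pred w0 | T' w0 == tau'] w]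
   = S1.
  rewrite /Pr (partition_big Pi [pred pi : {ffun Rw -> Rw'} | pi r == r']); last by move=> w /andP[].
  apply: eq_bigr => pi hpi; apply: eq_bigl => w /=.
  case: (eqVneq (Pi w) pi) => [->|]; first by rewrite /= in hpi; rewrite hpi ?eqxx ?andbT.
  by rewrite andbF.
have den : Pr P [pred w | T' w == tau'] = S1 + S2.
  rewrite /Pr (partition_big Pi predT) // (bigID [pred pi : {ffun Rw -> Rw'} | pi r == r']) /=.
  by congr (_ + _); apply: eq_bigr => pi _; apply: eq_bigl => w /=; rewrite andbC.
rewrite /cPr num den.
have hn : (0 < #|Rw|)%N by apply/card_gt0P; exists r.
have hn1 : 0 <= (#|Rw|%:R : R) - 1 by rewrite subr_ge0 ler1n.
have hc := cc_ge0.
have hc2 : 0 <= cc ^+ 2 by apply: exprn_ge0.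
have hS1 : 0 <= S1 by apply: sumr_ge0 => pi _; apply: hh_ge0.
have hS2 : 0 <= S2 by apply: sumr_ge0 => pi _; apply: hh_ge0.
have hm := main_ineq.
set k := 1 + _.
have hk : 0 < k by rewrite /k; have := mulr_ge0 hn1 hc2; lra.
case: (eqVneq (S1 + S2) 0) => [->|hne].
  by rewrite invr0 mulr0 divr_ge0 // ltW.
have hpos : 0 < S1 + S2 by rewrite lt_def hne addr_ge0.
rewrite ler_pdivrMr // mulrC mulrA mulr1 ler_pdivlMr //.
rewrite /k; nra.
Qed.
End Alg.

Theorem corollary5 (R : realType) (Rw Rw' A : finType) (Va : A -> finType)
    (rho : A -> R) (hcard : #|Rw| = #|Rw'|) (hrho : forall a, 0 <= rho a < 1)
    (Omega : finType) (P : Omega -> R) (hP : is_prob P)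
    (Pi : Omega -> {ffun Rw -> Rw'})
    (Delta : Omega -> {ffun {ffun Rw -> value Va} -> {ffun Rw -> value Va}}) :
  rr_perturbation rho P Pi Delta ->
  Pk_anonymization P
    (1 + (#|Rw|%:R - 1) *
         \prod_a ((1 - rho a) / (1 + (#|Va a|%:R - 1) * rho a)) ^+ 2)
    Pi Delta.
Proof.
move=> [hpm hrr] tau' _ T T' [_ [hind hDT]] r r'.
case: hP => hP0 _.
exact: (@final _ _ _ _ _ _ hrho _ _ hP0 _ _ _ _ _ hpm hrr hind hDT r r').
Qed.
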